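(* Consider the stochastic process $(S_t, A_t, R_{t+1})_{t\in\mathbb{Z}}$ generated by following a behavior policy $\mu$ in a Markov decision process, with target policy $\pi$, importance sampling ratios $\rho_t = \pi(S_t,A_t)/\mu(S_t,A_t)$, state-based discount $\gamma_t=\gamma(S_t)\in[0,1]$, state-based trace parameter $\lambda_t=\lambda(S_t)\in[0,1]$, a second trace function $\bar\lambda:\mathcal{S}\to[0,1]$ with $\bar\lambda_t=\bar\lambda(S_t)$, feature vectors $\mathbf{x}_t=\mathbf{x}(S_t)\in\mathbb{R}^n$, a fixed main weight vector $\mathbf{w}\in\mathbb{R}^n$ and a fixed weight vector $\mathbf{w}^{\mathrm{sq}}\in\mathbb{R}^n$. Define $\bar G_t = R_{t+1}+\gamma_{t+1}(1-\lambda_{t+1})\mathbf{x}_{t+1}^\top\mathbf{w}$, the $\lambda$-return $G^\lambda_t=\rho_t(\bar G_t+\gamma_{t+1}\lambda_{t+1}G^\lambda_{t+1})$, $\bar r_{t+1}=\rho_t^2\bar G_t^2+2\rho_t^2\gamma_{t+1}\lambda_{t+1}\bar G_t G^\lambda_{t+1}$, $\bar\gamma_{t+1}=\rho_t^2\gamma_{t+1}^2\lambda_{t+1}^2$, the $\bar\lambda$-squared-return $\bar V^{\bar\lambda}_t=\bar r_{t+1}+\bar\gamma_{t+1}\big((1-\bar\lambda_{t+1})\mathbf{x}_{t+1}^\top\mathbf{w}^{\mathrm{sq}}+\bar\lambda_{t+1}\bar V^{\bar\lambda}_{t+1}\big)$, and $\delta^{\bar\lambda}_t=\bar V^{\bar\lambda}_t-\mathbf{x}_t^\top\mathbf{w}^{\mathrm{sq}}$.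 Let $\bar g_{t+1}$ be an unbiased estimate of $\mathbb{E}[G^\lambda_{t+1}\mid S_{t+1}]$, i.e. $\mathbb{E}[\bar g_{t+1}\mid \mathcal{F}_{t+1}]=\mathbb{E}[G^\lambda_{t+1}\mid S_{t+1}]$, where $\mathcal{F}_{t+1}$ is the history $(\ldots,S_t,A_t,R_{t+1},S_{t+1})$ (and similarly at every time step). Define $\bar\delta_t=(\rho_t^2\bar G_t^2+2\rho_t^2\gamma_{t+1}\lambda_{t+1}\bar G_t\bar g_{t+1})+\bar\gamma_{t+1}\mathbf{x}_{t+1}^\top\mathbf{w}^{\mathrm{sq}}-\mathbf{x}_t^\top\mathbf{w}^{\mathrm{sq}}$ and the trace $\bar{\mathbf{z}}_t=\mathbf{x}_t+\bar\gamma_t\bar\lambda_t\bar{\mathbf{z}}_{t-1}$. Then $$\mathbb{E}[\delta^{\bar\lambda}_t\mathbf{x}_t]=\mathbb{E}[\bar\delta_t\bar{\mathbf{z}}_t].$$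
   Context: Expectations $\mathbb{E}$ are taken with respect to the stationary behavior of the process induced by following $\mu$ (so expectations of time-shifted quantities coincide), and all quantities involved (the recursively defined returns and the trace) are assumed well defined with finite expectations. The MDP has finite state set $\mathcal{S}$, action set $\mathcal{A}$, transition kernel $P$; the Markov property holds. *)

(* Defs.v *)
From HB Require Import structures.
From mathcomp Require Import all_boot all_order all_algebra.
From mathcomp Require Import all_classical all_reals all_analysis.
Set Implicit Arguments. Unset Strict Implicit. Unset Printing Implicit Defensive.
Import Order.TTheory GRing.Theory Num.Theory.
Local Open Scope classical_set_scope.
Local Open Scope ring_scope.

Section defs.
Context {d : measure_display} {T : measurableType d} {R : realType}.
Variable P : probability T R.

Definition Ex (X : T -> R) : \bar R := (\int[P]_w (X w)%:E)%E.

Definition integ (X : T -> R) : Prop := P.-integrable setT (EFin \o X).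

Definition meas_wrt (F : set (set T)) (X : T -> R) : Prop :=
  forall B : set R, measurable B -> F (X @^-1` B).

Definition is_cexp (F : set (set T)) (X h : T -> R) : Prop :=
  [/\ meas_wrt F h, integ h &
      forall B, F B -> (\int[P]_(w in B) (h w)%:E = \int[P]_(w in B) (X w)%:E)%E].

Context {S A : finType}.
Variables (St : int -> T -> S) (At : int -> T -> A) (Rt : int -> T -> R).
(* Rt u is the reward R_u (so R_{t+1} is Rt (t+1)). *)

(* generators of F_t = sigma(..., S_{t-1}, A_{t-1}, R_t, S_t) *)
Definition hist_gen (t : int) : set (set T) :=
  [set B | (exists u s, u <= t /\ B = St u @^-1` [set s]) \/
           (exists u a, u < t /\ B = At u @^-1` [set a]) \/
           (exists u (C : set R), [/\ u <= t, measurable C & B = Rt u @^-1` C])].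

Definition hist (t : int) : set (set T) := <<s hist_gen t >>.

Definition histA (t : int) : set (set T) :=
  <<s hist_gen t `|` [set B | exists a, B = At t @^-1` [set a]] >>.

Definition fut (t : int) : set (set T) :=
  <<s [set B | (exists u s, t <= u /\ B = St u @^-1` [set s]) \/
               (exists u a, t <= u /\ B = At u @^-1` [set a]) \/
               (exists u (C : set R), [/\ t < u, measurable C & B = Rt u @^-1` C])] >>.

Definition sigS (t : int) : set (set T) :=
  <<s [set B | exists s, B = St t @^-1` [set s]] >>.

End defs.

Definition dotv {R : realType} {n : nat} (u v : 'rV[R]_n) : R :=
  \sum_(i < n) u ord0 i * v ord0 i.

(* Main.v *)
Require Import Defs.
From HB Require Import structures.
From mathcomp Require Import all_boot all_order all_algebra.
From mathcomp Require Import all_classical all_reals all_analysis.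
From mathcomp Require Import measurable_realfun.
Import Order.TTheory GRing.Theory Num.Theory.
Local Open Scope classical_set_scope.
Local Open Scope ring_scope.
Import HBNNSimple.
From mathcomp Require Import lra ring.

Lemma Ex_shift d (T : measurableType d) (R : realType) (P : probability T R)
  (th : T -> T) (mth : measurable_fun setT th)
  (pres : forall B, measurable B -> P (th @^-1` B) = P B) (f : T -> R) :
  integ P f -> integ P (f \o th) -> Ex P (f \o th) = Ex P f.
Proof.
move=> intf intfth; rewrite /Ex.
have mf : measurable_fun [set: T] (EFin \o f : T -> \bar R) by case/integrableP: intf.
have := @integral_pushforward _ _ T T R th mth P setT (EFin \o f) mf.
rewrite preimage_setT => /(_ intfth measurableT) <-.
apply: eq_measure_integral => B mB _ /=.
by rewrite /pushforward pres.
Qed.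
Section ortho.
Context d (T : measurableType d) (R : realType) (P : probability T R).
Variable G : set (set T).
Hypothesis HG : G `<=` measurable.
Local Notation TF := (g_sigma_algebraType G).

Lemma Fmeas : <<s G>> `<=` measurable.
Proof. by apply: smallest_sub; [exact: sigma_algebra_measurable | exact: HG]. Qed.

Lemma TF_T (h : TF -> R) : measurable_fun (T:=TF) setT h ->
  measurable_fun (T:=T) setT h.
Proof.
move=> mh _ B mB; apply: Fmeas; exact: (mh measurableT B mB).
Qed.

Variable D : T -> R.
Hypothesis intD : integ P D.
Hypothesis HD : forall B, <<s G>> B -> (\int[P]_(x in B) (D x)%:E = 0)%E.

Lemma intD_mul (h : T -> R) (c : R) : measurable_fun setT h ->
  (forall x, `|h x| <= c) -> integ P (fun x => h x * D x).
Proof.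
move=> mh hc.
have mD : measurable_fun setT D.
  by case/integrableP: intD => /measurable_EFinP.
apply: (@le_integrable _ _ _ _ _ measurableT _ (fun x => (c * D x)%:E)).
- by apply/measurable_EFinP; exact: measurable_funM.
- move=> x _ /=; rewrite lee_fin !normrM ler_wpM2r //.
  by rewrite (le_trans (hc x)) // ler_norm.
- by apply: (integrableZl measurableT c intD).
Qed.

Lemma int_indicD A (c : R) : <<s G>> A ->
  (\int[P]_x ((c * \1_A x * D x)%:E) = 0)%E.
Proof.
move=> FA; have mA := Fmeas _ FA.
have i1 : integ P (fun x => \1_A x * D x).
  apply: (@intD_mul _ 1); first exact: measurable_indic.
  by move=> x; rewrite indicE; case: (x \in A); rewrite ?normr1 ?normr0.
under eq_integral do rewrite -mulrA EFinM.
rewrite integralZl //.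
rewrite (_ : (fun x => _) = (fun x => (D x)%:E) \_ A); last first.
  by apply/funext => x; rewrite /patch indicE; case: (x \in A); rewrite ?mul1r ?mul0r.
by rewrite -integral_mkcond HD // mule0.
Qed.


Lemma simple0 (h : {nnsfun TF >-> R}) : (\int[P]_x (((h : TF -> R) x * D x)%:E) = 0)%E.
Proof.
under eq_integral do rewrite (fimfunEord h) big_distrl /= -sumEFin.
set s := finmap.enum_fset _.
have FA i : <<s G>> (h @^-1` [set s`_i]).
  exact: (measurable_funPTI h (measurable_set1 _)).
rewrite integral_sum //.
  apply: big1 => i _.
  by apply: int_indicD; exact: FA.
move=> i.
apply: (@intD_mul (fun x => s`_i * \1_(h @^-1` [set s`_i]) x) `|s`_i|).
  apply: measurable_funM => //; exact: measurable_indic (Fmeas _ (FA i)).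
move=> x; rewrite normrM indicE; case: (_ \in _); rewrite ?normr1 ?normr0 ?mulr1 ?mulr0 //.
Qed.


Lemma ortho (Y : T -> R) (mY : meas_wrt <<s G>> Y)
  (intYD : integ P (fun x => Y x * D x)) : Ex P (fun x => Y x * D x) = 0%E.
Proof.
have mD : measurable_fun setT D.
  by case/integrableP: intD => /measurable_EFinP.
have mYF : measurable_fun (T:=TF) setT (Y : TF -> R).
  by move=> _ B mB; rewrite setTI; exact: mY.
have mYp : measurable_fun (T:=TF) setT (EFin \o (Y : TF -> R)^\+).
  by apply/measurable_EFinP; exact: measurable_funrpos.
have mYn : measurable_fun (T:=TF) setT (EFin \o (Y : TF -> R)^\-).
  by apply/measurable_EFinP; exact: measurable_funrneg.
pose a := nnsfun_approx measurableT mYp.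
pose b := nnsfun_approx measurableT mYn.
have Yp x : Y^\+ x <= `|Y x|.
  have := congr1 (fun f => f x) (funrposDneg Y) => /= <-.
  by rewrite lerDl funrneg_ge0.
have Yn x : Y^\- x <= `|Y x|.
  have := congr1 (fun f => f x) (funrposDneg Y) => /= <-.
  by rewrite lerDr funrpos_ge0.
have a0 k x : 0 <= (a k : TF -> R) x by [].
have b0 k x : 0 <= (b k : TF -> R) x by [].
have aY k x : (a k : TF -> R) x <= `|Y x|.
  apply: le_trans (Yp x); rewrite -lee_fin /a nnsfun_approxE.
  by apply: (le_approx k (x:=x)) => // y _; rewrite lee_fin funrpos_ge0.
have bY k x : (b k : TF -> R) x <= `|Y x|.
  apply: le_trans (Yn x); rewrite -lee_fin /b nnsfun_approxE.
  by apply: (le_approx k (x:=x)) => // y _; rewrite lee_fin funrpos_ge0.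
have ma k : measurable_fun (T:=T) setT (a k : TF -> R).
  by apply: TF_T; exact: measurable_funPT.
have mb k : measurable_fun (T:=T) setT (b k : TF -> R).
  by apply: TF_T; exact: measurable_funPT.
have intY (h : T -> R) : measurable_fun setT h -> (forall x, `|h x| <= `|Y x|) ->
    integ P (fun x => h x * D x).
  move=> mh hY.
  apply: (@le_integrable _ _ _ _ _ measurableT _ (EFin \o (fun x => Y x * D x))).
  - by apply/measurable_EFinP; exact: measurable_funM.
  - by move=> x _ /=; rewrite lee_fin !normrM ler_wpM2r.
  - exact: intYD.
have ia k : integ P (fun x => (a k : TF -> R) x * D x).
  by apply: intY => // x; rewrite ger0_norm.
have ib k : integ P (fun x => (b k : TF -> R) x * D x).
  by apply: intY => // x; rewrite ger0_norm.
pose f_ k (x : T) := ((((a k : TF -> R) x - (b k : TF -> R) x) * D x)%:E).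
have int0 k : (\int[P]_x f_ k x = 0)%E.
  rewrite /f_; under eq_integral do rewrite mulrBl EFinB.
  rewrite integralB //; [|exact: ia k|exact: ib k].
  by rewrite simple0 // simple0 // sube0.
have ca x : (fun k => (a k : TF -> R) x) @ \oo --> (Y^\+ x : R^o).
  have := @cvg_nnsfun_approx _ TF R setT measurableT _ mYp _ x I.
  move=> /(_ (fun y _ => funrpos_ge0 _ _)).
  by move=> /fine_cvgP [_].
have cb x : (fun k => (b k : TF -> R) x) @ \oo --> (Y^\- x : R^o).
  have := @cvg_nnsfun_approx _ TF R setT measurableT _ mYn _ x I.
  move=> /(_ (fun y _ => funrneg_ge0 _ _)).
  by move=> /fine_cvgP [_].
have mf_ k : measurable_fun (T:=T) setT (f_ k).
  apply/measurable_EFinP; apply: measurable_funM; last exact: mD.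
  by apply: measurable_funB; [exact: ma|exact: mb].
have mf : measurable_fun setT (EFin \o (fun x => Y x * D x)).
  by case/integrableP: intYD.
have f_f : {ae P, forall x, setT x -> f_ ^~ x @ \oo --> (EFin \o (fun x => Y x * D x)) x}.
  apply: aeW => x _ /=.
  apply: cvg_EFin; first exact: nearW.
  have e := congr1 (fun f => f x) (funrposBneg Y); rewrite /= in e.
  rewrite -e; apply: cvgMl; exact: cvgB.
have ig : P.-integrable setT (EFin \o (fun x => `|Y x * D x|)).
  exact: (integrable_abse intYD).
have f_g : {ae P, forall x k, setT x -> (`|f_ k x| <= ((`|Y x * D x|)%R)%:E)%E}.
  apply: aeW => x k _ /=; rewrite lee_fin !normrM ler_wpM2r //.
  have := a0 k x; have := b0 k x; have := aY k x; have := bY k x.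
  rewrite ler_norml; lra.
have [_ _] := dominated_convergence measurableT mf_ mf f_f ig f_g.
rewrite (_ : [sequence _]_n = cst 0%E); last first.
  by apply/funext => k /=; rewrite int0.
move=> /(cvg_lim (@ereal_hausdorff R)).
rewrite lim_cst // => <-.
Qed.

End ortho.
Section mw.
Context {d} {T : measurableType d} (R : realType) (F : set (set T)).
Local Notation TF := (g_sigma_algebraType F).

Lemma meas_wrtP (f : T -> R) :
  meas_wrt <<s F>> f <-> measurable_fun (T:=TF) setT (f : TF -> R).
Proof.
split=> [mf _ B mB|mf B mB]; first by rewrite setTI; exact: mf.
by have := mf measurableT B mB; rewrite setTI.
Qed.

Lemma meas_wrtM (f g : T -> R) : meas_wrt <<s F>> f -> meas_wrt <<s F>> g ->
  meas_wrt <<s F>> (fun x => f x * g x).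
Proof.
move=> /meas_wrtP mf /meas_wrtP mg; apply/meas_wrtP; exact: measurable_funM.
Qed.

Lemma meas_wrtD (f g : T -> R) : meas_wrt <<s F>> f -> meas_wrt <<s F>> g ->
  meas_wrt <<s F>> (fun x => f x + g x).
Proof.
move=> /meas_wrtP mf /meas_wrtP mg; apply/meas_wrtP; exact: measurable_funD.
Qed.

Lemma meas_wrt_fin (K : finType) (key : T -> K) (phi : K -> R) :
  (forall k, <<s F>> (key @^-1` [set k])) -> meas_wrt <<s F>> (fun x => phi (key x)).
Proof.
move=> Hk B mB.
have -> : (fun x => phi (key x)) @^-1` B =
    \big[setU/set0]_(k <- enum K | phi k \in B) key @^-1` [set k].
  apply/seteqP; split => x /=.
    move=> Bx; rewrite -bigcup_seq_cond; exists (key x) => //=.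
    by apply/andP; split; [rewrite mem_enum | exact: mem_set].
  rewrite -bigcup_seq_cond => -[k /= /andP[_ kB] ->].
  by rewrite inE in kB.
apply: (@bigsetU_measurable _ TF) => k _; exact: Hk.
Qed.

End mw.
Section hm.
Context d (T : measurableType d) (R : realType) (S A : finType)
  (St : int -> T -> S) (At : int -> T -> A) (Rt : int -> T -> R).
Hypothesis mS : forall t s, measurable (St t @^-1` [set s]).
Hypothesis mA : forall t a, measurable (At t @^-1` [set a]).
Hypothesis mR : forall t, measurable_fun setT (Rt t).

Lemma hist_gen_meas t : hist_gen St At Rt t `<=` measurable.
Proof.
move=> B [[u [s [_ ->]]]|[[u [a [_ ->]]]|[u [C [_ mC ->]]]]] //.
by rewrite -[X in measurable X]setTI; exact: mR measurableT C mC.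
Qed.

Lemma hist_sub t u : t <= u -> hist St At Rt t `<=` hist St At Rt u.
Proof.
move=> tu; apply: sub_smallest2r; first exact: smallest_sigma_algebra.
move=> B [[v [s [vt ->]]]|[[v [a [vt ->]]]|[v [C [vt mC ->]]]]].
- by left; exists v, s; split => //; exact: le_trans tu.
- by right; left; exists v, a; split => //; exact: lt_le_trans tu.
- by right; right; exists v, C; split => //; exact: le_trans tu.
Qed.

Lemma hist_S t u s : u <= t -> hist St At Rt t (St u @^-1` [set s]).
Proof. by move=> ut; apply: sub_gen_smallest; left; exists u, s. Qed.

Lemma hist_A t u a : u < t -> hist St At Rt t (At u @^-1` [set a]).
Proof. by move=> ut; apply: sub_gen_smallest; right; left; exists u, a. Qed.

Lemma hist_R t u : u <= t -> meas_wrt (hist St At Rt t) (Rt u).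
Proof. by move=> ut C mC; apply: sub_gen_smallest; right; right; exists u, C. Qed.

Lemma hist_SA t u s a : u < t ->
  hist St At Rt t ((fun o => (St u o, At u o)) @^-1` [set (s, a)]).
Proof.
move=> ut.
have -> : (fun o => (St u o, At u o)) @^-1` [set (s, a)] =
   St u @^-1` [set s] `&` At u @^-1` [set a].
  by apply/seteqP; split => x /=; [case => -> ->|case => -> ->].
apply: (@measurableI _ (g_sigma_algebraType (hist_gen St At Rt t))).
  by apply: hist_S; exact: ltW.
exact: hist_A.
Qed.

End hm.

Section exhelp.
Context d (T : measurableType d) (R : realType) (P : probability T R).

Lemma integD (f g : T -> R) : integ P f -> integ P g -> integ P (fun o => f o + g o).
Proof.
move=> fi gi; apply: eq_integrable (integrableD measurableT fi gi) => //= o _.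
Qed.

Lemma integZ (c : R) (f : T -> R) : integ P f -> integ P (fun o => c * f o).
Proof.
move=> fi; apply: eq_integrable (integrableZl measurableT c fi) => //= o _.
Qed.

Lemma ExD (f g : T -> R) : integ P f -> integ P g ->
  Ex P (fun o => f o + g o) = (Ex P f + Ex P g)%E.
Proof.
move=> fi gi; rewrite /Ex -integralD //.
Qed.

Lemma ExZ (c : R) (f : T -> R) : integ P f ->
  Ex P (fun o => c * f o) = (c%:E * Ex P f)%E.
Proof.
move=> fi; rewrite /Ex -integralZl //.
Qed.

Lemma Ex_fin (f : T -> R) : integ P f -> Ex P f \is a fin_num.
Proof. by move=> fi; apply: integrable_fin_num. Qed.

End exhelp.

Theorem theorem1
  (d : measure_display) (T : measurableType d) (R : realType)
  (P : probability T R) (S A : finType) (n : nat)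
  (* MDP: transition kernel, behaviour and target policies *)
  (Ptr : S -> A -> S -> R) (mu pi : S -> A -> R)
  (* state-based discount, trace parameters, features, weights *)
  (gam lam lamb : S -> R) (x : S -> 'rV[R]_n) (w wsq : 'rV[R]_n)
  (* the process (S_t, A_t, R_t) *)
  (St : int -> T -> S) (At : int -> T -> A) (Rt : int -> T -> R)
  (* recursively defined quantities: G^lambda_t, Vbar^lambdabar_t, zbar_t,
     and the estimates gbar_t *)
  (G V : int -> T -> R) (z : int -> T -> 'rV[R]_n) (gb : int -> T -> R) :
  (* the MDP data *)
  (forall s a s', 0 <= Ptr s a s') -> (forall s a, \sum_s' Ptr s a s' = 1) ->
  (forall s a, 0 <= mu s a) -> (forall s, \sum_a mu s a = 1) ->
  (forall s a, 0 <= pi s a) -> (forall s, \sum_a pi s a = 1) ->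
  (forall s a, 0 < pi s a -> 0 < mu s a) ->
  (forall s, 0 <= gam s <= 1) -> (forall s, 0 <= lam s <= 1) ->
  (forall s, 0 <= lamb s <= 1) ->
  (* random variables *)
  (forall t s, measurable (St t @^-1` [set s])) ->
  (forall t a, measurable (At t @^-1` [set a])) ->
  (forall t, measurable_fun setT (Rt t)) ->
  (* actions are drawn from mu *)
  (forall t a B, hist St At Rt t B ->
     P (B `&` At t @^-1` [set a]) = (\int[P]_(o in B) (mu (St t o) a)%:E)%E) ->
  (* transitions follow Ptr *)
  (forall t s' B, histA St At Rt t B ->
     P (B `&` St (t + 1) @^-1` [set s']) =
       (\int[P]_(o in B) (Ptr (St t o) (At t o) s')%:E)%E) ->
  (* Markov property: given S_t, the future is independent of the history *)
  (forall t (X h : T -> R), meas_wrt (fut St At Rt t) X -> integ P X ->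
     is_cexp P (sigS St t) X h -> is_cexp P (hist St At Rt t) X h) ->
  (* stationarity: a measure-preserving time shift *)
  (exists theta : T -> T, [/\ measurable_fun setT theta,
     (forall B, measurable B -> P (theta @^-1` B) = P B),
     (forall t, [/\ St (t + 1) = St t \o theta, At (t + 1) = At t \o theta
                   & Rt (t + 1) = Rt t \o theta]) &
     (forall t, [/\ G (t + 1) = G t \o theta, V (t + 1) = V t \o theta
                   & z (t + 1) = z t \o theta])]) ->
  let rho t o := pi (St t o) (At t o) / mu (St t o) (At t o) in
  let gm t o := gam (St t o) in
  let lm t o := lam (St t o) in
  let lb t o := lamb (St t o) in
  let xt t o := x (St t o) in
  let Gbar t o := Rt (t + 1) o + gm (t + 1) o * (1 - lm (t + 1) o) * dotv (xt (t + 1) o) w in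
  let rbar t o := (* rbar_{t+1} *)
    rho t o ^+ 2 * Gbar t o ^+ 2
    + 2 * rho t o ^+ 2 * gm (t + 1) o * lm (t + 1) o * Gbar t o * G (t + 1) o in
  let gbar t o := (* gammabar_t *)
    rho (t - 1) o ^+ 2 * gm t o ^+ 2 * lm t o ^+ 2 in
  let deltaL t o := V t o - dotv (xt t o) wsq in
  let deltab t o :=
    (rho t o ^+ 2 * Gbar t o ^+ 2
     + 2 * rho t o ^+ 2 * gm (t + 1) o * lm (t + 1) o * Gbar t o * gb (t + 1) o)
    + gbar (t + 1) o * dotv (xt (t + 1) o) wsq - dotv (xt t o) wsq in
  (* recursive definitions *)
  (forall t o, G t o = rho t o * (Gbar t o + gm (t + 1) o * lm (t + 1) o * G (t + 1) o)) ->
  (forall t o, V t o = rbar t o + gbar (t + 1) o *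
     ((1 - lb (t + 1) o) * dotv (xt (t + 1) o) wsq + lb (t + 1) o * V (t + 1) o)) ->
  (forall t o, z t o = xt t o + (gbar t o * lb t o) *: z (t - 1) o) ->
  (* gbar_{t+1} is an unbiased estimate: E[gbar_{t+1} | F_{t+1}] = E[G_{t+1} | S_{t+1}] *)
  (forall t, exists h : T -> R,
     is_cexp P (hist St At Rt (t + 1)) (gb (t + 1)) h /\
     is_cexp P (sigS St (t + 1)) (G (t + 1)) h) ->
  (* well-definedness: measurability and finite expectations *)
  (forall t, meas_wrt (fut St At Rt t) (G t)) ->
  (forall t i, meas_wrt (hist St At Rt t) (fun o => z t o ord0 i)) ->
  (forall t, integ P (G t) /\ integ P (V t) /\ integ P (gb t)) ->
  (forall t i, [/\ integ P (fun o => deltaL t o * xt t o ord0 i),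
     integ P (fun o => deltaL t o * z t o ord0 i),
     integ P (fun o => deltab t o * z t o ord0 i),
     integ P (fun o => rho t o ^+ 2 * gm (t + 1) o * lm (t + 1) o * Gbar t o
                         * z t o ord0 i * G (t + 1) o) &
     integ P (fun o => rho t o ^+ 2 * gm (t + 1) o * lm (t + 1) o * Gbar t o
                         * z t o ord0 i * gb (t + 1) o)]) ->
  forall (t : int) (i : 'I_n),
    Ex P (fun o => deltaL t o * xt t o ord0 i) = Ex P (fun o => deltab t o * z t o ord0 i).
Proof.
move=> P0 P1 mu0 mu1 pi0 pi1 pimu gam01 lam01 lamb01 mS mA mR Hact Htr Hmark.
move=> [th [mth pres Hsh Hsh2]] rho gm lm lb xt Gbar rbar gbar deltaL deltab.
move=> HG HV Hz Hgb mGfut mz Hint Hint2 t i.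
pose Y o := rho t o ^+ 2 * gm (t + 1) o * lm (t + 1) o * Gbar t o * z t o ord0 i.
pose Df o := G (t + 1) o - gb (t + 1) o.
have Fm u : hist St At Rt u `<=` measurable.
  apply: smallest_sub; first exact: sigma_algebra_measurable.
  exact: hist_gen_meas.
have [h [hgb hG]] := Hgb t.
have [Gi [Vi gbi]] := Hint (t + 1).
have [_ hi hGB] := Hmark (t + 1) (G (t + 1)) h (mGfut _) Gi hG.
have [_ _ hgbB] := hgb.
have HD B : hist St At Rt (t + 1) B -> (\int[P]_(x in B) (Df x)%:E = 0)%E.
  move=> HB; have mB := Fm _ _ HB.
  rewrite /Df; under eq_integral do rewrite EFinB.
  rewrite integralB //; last 2 first.
  - exact: integrableS Gi.
  - exact: integrableS gbi.
  rewrite -hGB // -hgbB // subee //.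
  by apply: integrable_fin_num => //; exact: integrableS hi.
have tt1 : t < t + 1 by rewrite ltrDl.
have mY : meas_wrt (hist St At Rt (t + 1)) Y.
  rewrite /Y /hist.
  apply: meas_wrtM; last first.
    move=> C mC; exact: (hist_sub _ _ _ _ _ St At Rt _ _ (ltW tt1) _ (mz t i C mC)).
  apply: meas_wrtM; last first.
    apply: meas_wrtD; first exact: hist_R.
    apply: (@meas_wrt_fin _ _ R _ _ (St (t + 1))
      (fun s => gam s * (1 - lam s) * dotv (x s) w)).
    by move=> s; exact: hist_S.
  apply: meas_wrtM; last first.
    apply: (@meas_wrt_fin _ _ R _ _ (St (t + 1)) lam).
    by move=> s; exact: hist_S.
  apply: meas_wrtM; last first.
    apply: (@meas_wrt_fin _ _ R _ _ (St (t + 1)) gam).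
    by move=> s; exact: hist_S.
  apply: (@meas_wrt_fin _ _ R _ _ (fun o => (St t o, At t o))
    (fun p => (pi p.1 p.2 / mu p.1 p.2) ^+ 2)).
  by move=> [s a]; exact: hist_SA.
have [i1 i2 i3 i4 i5] := Hint2 t i.
have [j1 j2 j3 j4 j5] := Hint2 (t + 1) i.
have intDf : integ P Df.
  apply: eq_integrable (integrableB measurableT Gi gbi) => //= o _.
have intYD : integ P (fun o => Y o * Df o).
  apply: eq_integrable (integrableB measurableT i4 i5) => //= o _.
  by rewrite /Df /Y -EFinB mulrBr.
have E0 : Ex P (fun o => Y o * Df o) = 0%E.
  apply: (@ortho _ _ _ _ (hist_gen St At Rt (t + 1))) => //.
  exact: hist_gen_meas.
have pw : (fun o => deltaL t o * z t o ord0 i + deltaL (t + 1) o * xt (t + 1) o ord0 i) =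
  (fun o => (deltab t o * z t o ord0 i + 2 * (Y o * Df o))
             + deltaL (t + 1) o * z (t + 1) o ord0 i).
  apply/funext => o.
  have ez : z (t + 1) o ord0 i =
      xt (t + 1) o ord0 i + gbar (t + 1) o * lb (t + 1) o * z t o ord0 i.
    by rewrite Hz !mxE addrK.
  rewrite ez /deltaL (HV t o) /deltab /Y /Df /rbar.
  ring.
have s1 : Ex P (fun o => deltaL (t + 1) o * xt (t + 1) o ord0 i) =
          Ex P (fun o => deltaL t o * xt t o ord0 i).
  have e : (fun o => deltaL (t + 1) o * xt (t + 1) o ord0 i) =
      (fun o => deltaL t o * xt t o ord0 i) \o th.
    rewrite /deltaL /xt; have [-> _ _] := Hsh t; have [_ -> _] := Hsh2 t.
    by apply/funext => o.
  by rewrite e; apply: Ex_shift => //; rewrite -e.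
have s2 : Ex P (fun o => deltaL (t + 1) o * z (t + 1) o ord0 i) =
          Ex P (fun o => deltaL t o * z t o ord0 i).
  have e : (fun o => deltaL (t + 1) o * z (t + 1) o ord0 i) =
      (fun o => deltaL t o * z t o ord0 i) \o th.
    rewrite /deltaL /xt; have [-> _ _] := Hsh t; have [_ -> ->] := Hsh2 t.
    by apply/funext => o.
  by rewrite e; apply: Ex_shift => //; rewrite -e.
have := congr1 (Ex P) pw.
rewrite ExD // ExD //; last first.
  by apply: integD => //; exact: integZ.
rewrite ExD //; last exact: integZ.
rewrite (ExZ _ _ _ P 2 _ intYD) E0 mule0 adde0 s1 s2.
have f1 := Ex_fin _ _ _ P _ i2; have f2 := Ex_fin _ _ _ P _ i1; have f3 := Ex_fin _ _ _ P _ i3.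
move: f1 f2 f3.
set e1 := Ex P _; set e2 := Ex P _; set e3 := Ex P _.
move=> f1 f2 f3.
rewrite -(fineK f1) -(fineK f2) -(fineK f3) -!EFinD => H.
have H' := EFin_inj H.
by congr (_%:E); lra.
Qed.
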